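(* Let $n\geq 5$. Suppose (1) every graph in $\mathcal{GAQ}_{n-1}$ is even strongly super matched, and (2) every graph in $\mathcal{GAQ}_{n-1}$ is fractional strongly super matched. Then every graph in $\mathcal{GAQ}_n$ is fractional strongly super matched.
   Context: The $n$-dimensional augmented cube $AQ_n$ ($n\geq 1$) has vertex set all binary strings $u_1u_2\cdots u_n$. $AQ_1\cong K_2$ on vertices $0,1$. For $n\geq 2$, $AQ_n$ consists of a copy $AQ^0_{n-1}$ of $AQ_{n-1}$ with $0$ prefixed to every label and a copy $AQ^1_{n-1}$ with $1$ prefixed, plus the following edges: $0u_1\cdots u_{n-1}$ is adjacent to $1v_1\cdots v_{n-1}$ iff either $u_i=v_i$ for all $i$ (cross edge) or $u_i\neq v_i$ for all $i$ (complement edge). Generalized augmented cubes: $\mathcal{GAQ}_4=\{AQ_4\}$; for $n\geq 5$, $\mathcal{GAQ}_n$ consists of all graphs $(V_1\cup V_2, E_1\cup E_2\cup M_1\cup M_2)$ where $(V_1,E_1),(V_2,E_2)$ are (vertex-disjoint copies of, possibly identical) graphs in $\mathcal{GAQ}_{n-1}$ and $M_1,M_2$ are edge-disjoint perfect matchings between $V_1$ and $V_2$; such graphs are $(2n-1)$-regular on $2^n$ vertices. For $F\subseteq V(G)\cup E(G)$, $G-F$ denotes $G$ with the vertices and edges of $F$ deleted. A strong matching preclusion (SMP) set of $G$ is a set $F\subseteq V(G)\cup E(G)$ such that $G-F$ has neither a perfect matching nor an almost-perfect matching (a matching covering all vertices but one); $smp(G)$ is the minimum size of an SMP set, and an SMP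 set of that size is optimal. $G$ is strongly maximally matched if $smp(G)=\delta(G)$ (minimum degree). For an even graph $G$ (even number of vertices), an optimal SMP set $F$ is trivial if $G-F$ has an isolated vertex and $F$ contains an even number of vertices. $G$ is even strongly super matched if it is strongly maximally matched and every optimal SMP set containing an even number of vertices is trivial. A fractional perfect matching of $G$ is $f:E(G)\to[0,1]$ with $\sum_{e\ni v}f(e)=1$ for every vertex $v$. A fractional strong matching preclusion (FSMP) set is $F\subseteq V(G)\cup E(G)$ with $G-F$ having no fractional perfect matching; $fsmp(G)$ is the minimum size of an FSMP set, and an FSMP set of that size is optimal. $G$ is fractional strongly maximally matched if $fsmp(G)=\delta(G)$, and fractional strongly super matched if in addition $G-F$ has an isolated vertex for every optimal FSMP set $F$. *)

(* Defs.v *)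
From HB Require Import structures.
From mathcomp Require Import all_boot all_order all_algebra.
Set Implicit Arguments. Unset Strict Implicit. Unset Printing Implicit Defensive.
Import Order.TTheory GRing.Theory Num.Theory.

(* adjacency of AQ_n on binary strings of equal length n (first bit = prefix) *)
Fixpoint aq (u v : seq bool) : bool :=
  match u, v with
  | x :: u', y :: v' =>
      if x == y then aq u' v'
      else (u' == v') || all2 (fun a b => a != b) u' v'
  | _, _ => false
  end.

Definition AQ4 : rel (4.-tuple bool) := fun u v => aq u v.

(* The edge set of the joined graph: E1 ∪ E2 ∪ M1 ∪ M2, where the perfect
   matchings M1, M2 between V1 and V2 are given by bijections m1, m2 : V1 -> V2. *)
Definition gaq_join (T1 T2 : finType) (e1 : rel T1) (e2 : rel T2)
  (m1 m2 : T1 -> T2) (x y : T1 + T2) : bool :=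
  match x, y with
  | inl a, inl b => e1 a b
  | inr a, inr b => e2 a b
  | inl a, inr b => (m1 a == b) || (m2 a == b)
  | inr a, inl b => (m1 b == a) || (m2 b == a)
  end.

(* GAQ n T e : the graph (T, e) belongs to GAQ_n (up to vertex relabelling). *)
Inductive GAQ : nat -> forall T : finType, rel T -> Prop :=
| GAQ_base (T : finType) (e : rel T) (g : T -> 4.-tuple bool) :
    bijective g -> (forall x y, e x y = AQ4 (g x) (g y)) -> GAQ 4 e
| GAQ_step (n : nat) (T T1 T2 : finType) (e : rel T) (e1 : rel T1) (e2 : rel T2)
    (f : T1 + T2 -> T) (m1 m2 : T1 -> T2) :
    5 <= n -> GAQ n.-1 e1 -> GAQ n.-1 e2 ->
    bijective f -> bijective m1 -> bijective m2 ->
    (forall a, m1 a != m2 a) ->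
    (forall x y, e (f x) (f y) = gaq_join e1 e2 m1 m2 x y) ->
    GAQ n e.

Section Graph.
Variables (T : finType) (e : rel T).

Definition is_edge (s : {set T}) : bool :=
  [exists x, exists y, (s == [set x; y]) && e x y].

(* a faulty set F ⊆ V(G) ∪ E(G): F.1 its vertices, F.2 its edges *)
Definition fault := ({set T} * {set {set T}})%type.
Definition valid_fault (F : fault) : Prop := forall s, s \in F.2 -> is_edge s.
Definition fsize (F : fault) : nat := #|F.1| + #|F.2|.

Definition rvert (F : fault) (v : T) : bool := v \notin F.1.
Definition redge (F : fault) (s : {set T}) : bool :=
  [&& is_edge s, [disjoint s & F.1] & s \notin F.2].

Definition has_pm (F : fault) : Prop :=
  exists M : {set {set T}}, (forall s, s \in M -> redge F s) /\
    forall v, rvert F v -> #|[set s in M | v \in s]| = 1.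

Definition has_apm (F : fault) : Prop :=
  exists (M : {set {set T}}) (w : T), (forall s, s \in M -> redge F s) /\
    rvert F w /\ #|[set s in M | w \in s]| = 0 /\
    forall v, rvert F v -> v != w -> #|[set s in M | v \in s]| = 1.

Definition SMP_set (F : fault) : Prop := valid_fault F /\ ~ has_pm F /\ ~ has_apm F.

Definition smp_is (k : nat) : Prop :=
  (exists F, SMP_set F /\ fsize F = k) /\ forall F, SMP_set F -> k <= fsize F.

Definition min_degree : nat := \big[minn/#|T|]_(v : T) #|[set w | e v w]|.

Definition strongly_maximally_matched : Prop := smp_is min_degree.

Definition has_isolated (F : fault) : Prop :=
  exists v, rvert F v /\ forall s, redge F s -> v \notin s.

Definition trivial_SMP (F : fault) : Prop := has_isolated F /\ ~~ odd #|F.1|.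

Definition even_strongly_super_matched : Prop :=
  strongly_maximally_matched /\
  forall F, SMP_set F -> fsize F = min_degree -> ~~ odd #|F.1| -> trivial_SMP F.

(* fractional notions, over an ordered field R (the reals in the paper) *)
Variable R : realFieldType.

Definition has_fpm (F : fault) : Prop :=
  exists f : {set T} -> R,
    (forall s, redge F s -> (0 <= f s <= 1)%R) /\
    forall v, rvert F v -> (\sum_(s | redge F s && (v \in s)) f s)%R = 1%R.

Definition FSMP_set (F : fault) : Prop := valid_fault F /\ ~ has_fpm F.

Definition fsmp_is (k : nat) : Prop :=
  (exists F, FSMP_set F /\ fsize F = k) /\ forall F, FSMP_set F -> k <= fsize F.

Definition frac_strongly_maximally_matched : Prop := fsmp_is min_degree.

Definition frac_strongly_super_matched : Prop :=
  frac_strongly_maximally_matched /\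
  forall F, FSMP_set F -> fsize F = min_degree -> has_isolated F.

End Graph.

(* Main.v *)
Require Import Defs.
From HB Require Import structures.
From mathcomp Require Import all_boot all_order all_algebra zify.
From Stdlib Require Import Classical.
Set Implicit Arguments. Unset Strict Implicit. Unset Printing Implicit Defensive.
Import Order.TTheory GRing.Theory Num.Theory.

Section Set2.
Variable T : finType.
Implicit Types x y u v : T.

Lemma set2_eq x y u v : [set x; y] = [set u; v] ->
  (x = u /\ y = v) \/ (x = v /\ y = u).
Proof.
move=> E.
have hx : x \in [set u; v] by rewrite -E set21.
have hy : y \in [set u; v] by rewrite -E set22.
have hu : u \in [set x; y] by rewrite E set21.
have hv : v \in [set x; y] by rewrite E set22.
case/set2P: hx => hx; case/set2P: hy => hy; subst.
- by left; move: hv => /set2P [] ->.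
- by left.
- by right.
- by right; move: hu => /set2P [] ->.
Qed.

Lemma set2_same x y w : [set x; y] = [set x; w] -> y = w.
Proof. by case/set2_eq => [[_ ->]|[-> ->]]. Qed.

Lemma disjoint_set2 x y (A : {set T}) :
  [disjoint [set x; y] & A] = (x \notin A) && (y \notin A).
Proof. by rewrite disjoints_subset subUset !sub1set !inE. Qed.

Lemma card_set2_le x y : #|[set x; y]| <= 2.
Proof. by rewrite cards2; case: (x != y). Qed.

End Set2.

Lemma card_sum_split (T1 T2 T : finType) (f : T1 + T2 -> T) (X : {set T}) :
  bijective f ->
  #|X| = #|[set x | f (inl x) \in X]| + #|[set y | f (inr y) \in X]|.
Proof.
move=> bf.
have -> : #|X| = #|[set p | f p \in X]|.
  have inj := bij_inj bf.
  rewrite -(card_imset [set p | f p \in X] inj); apply: eq_card => z.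
  case: bf => g fg gf.
  apply/idP/imsetP => [hz|[p]]; last by rewrite inE => h ->.
  by exists (g z); rewrite ?inE gf.
rewrite -!sum1dep_card.
rewrite big_sumType /=.
by [].
Qed.

Definition Nb (T : finType) (e : rel T) (F : fault T) (A : {set T}) : {set T} :=
  [set w | rvert F w && [exists x in A, redge e F [set x; w]]].

Definition alive (T : finType) (F : fault T) : {set T} := [set v | rvert F v].

Section Gen.
Variables (T : finType) (e : rel T).
Hypothesis sym : forall x y, e x y = e y x.
Hypothesis irr : irreflexive e.

Lemma is_edge_set2 x y : is_edge e [set x; y] = e x y.
Proof.
apply/idP/idP => [|h]; last by apply/existsP; exists x; apply/existsP; exists y; rewrite eqxx.
case/existsP => u /existsP [v] /andP [/eqP E huv].
by case: (set2_eq E) => [[-> ->] | [-> ->]] //; rewrite sym.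
Qed.

Lemma is_edgeP s : is_edge e s -> exists u v, s = [set u; v] /\ e u v.
Proof. by case/existsP => u /existsP [v] /andP [/eqP E huv]; exists u, v. Qed.

Lemma edge_at s a : is_edge e s -> a \in s -> exists w, s = [set a; w] /\ e a w.
Proof.
case/is_edgeP => u [v [-> huv]] /set2P [] ->; first by exists v.
by exists u; rewrite setUC sym.
Qed.

Lemma edge_neq x y : e x y -> x != y.
Proof. by apply: contraTneq => ->; rewrite irr. Qed.

Lemma redge_set2 F x y : redge e F [set x; y] =
  [&& e x y, x \notin F.1, y \notin F.1 & [set x; y] \notin F.2].
Proof. by rewrite /redge is_edge_set2 disjoint_set2 !andbA. Qed.

Lemma redge_sym F x y : redge e F [set x; y] = redge e F [set y; x].
Proof. by rewrite setUC. Qed.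

Lemma redge_alive F x y : redge e F [set x; y] -> rvert F x /\ rvert F y.
Proof. by rewrite redge_set2 => /and4P [_ hx hy _]. Qed.

Lemma set2_inj_at (a : T) : injective (fun w : T => [set a; w]).
Proof. by move=> w w' /set2_same. Qed.

Lemma sum_edges_at (V : nmodType) F (a : T) (phi : {set T} -> V) :
  (\sum_(s | redge e F s && (a \in s)) phi s =
   \sum_(w | redge e F [set a; w]) phi [set a; w])%R.
Proof.
rewrite -(big_imset _ (in2W (@set2_inj_at a))) /=.
apply: eq_bigl => s; apply/idP/imsetP.
- case/andP => hr ha; case: (edge_at (andP hr).1 ha) => w [Es _].
  by exists w => //; rewrite -topredE /= -Es.
- by case=> w; rewrite -topredE /= => hw ->; rewrite set21 andbT; exact: hw.
Qed.

End Gen.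

Section Hall1.
Variables (T : finType) (e : rel T) (R : realFieldType).
Hypothesis sym : forall x y, e x y = e y x.
Hypothesis irr : irreflexive e.

Lemma fpm_hall F (A : {set T}) : has_fpm e R F -> A \subset alive F -> #|A| <= #|Nb e F A|.
Proof.
case=> f [f01 fsum] sA.
set N := Nb e F A.
pose h a w : R := if redge e F [set a; w] then f [set a; w] else 0%R.
have hsym a w : h a w = h w a by rewrite /h setUC.
have hge0 a w : (0 <= h a w)%R.
  by rewrite /h; case: ifP => // hr; case/andP: (f01 _ hr).
have row a : rvert F a -> (\sum_w h a w = 1)%R.
  move=> ha; rewrite -(fsum a ha) (sum_edges_at sym) [RHS]big_mkcond.
  by apply: eq_bigr => w _.
have key : (#|A|%:R <= #|N|%:R :> R)%R.
  have -> : (#|A|%:R = \sum_(a in A) \sum_w h a w :> R)%R.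
    rewrite -sumr_const; apply: eq_bigr => a aA; rewrite row //.
    by move/subsetP: sA => /(_ a aA); rewrite inE.
  have -> : (\sum_(a in A) \sum_w h a w = \sum_(a in A) \sum_(w in N) h a w :> R)%R.
    apply: eq_bigr => a aA; rewrite [RHS]big_mkcond; apply: eq_bigr => w _.
    case: ifP => // wN; rewrite /h; case: ifP => // hr.
    move: wN; rewrite /N /Nb inE (redge_alive sym hr).2 /=.
    by move/negbT/negP; case; apply/existsP; exists a; rewrite aA.
  apply: (@le_trans _ _ (\sum_a \sum_(w in N) h a w)%R).
    rewrite [X in (_ <= X)%R](bigID (fun a => a \in A)) /= lerDl.
    by apply: sumr_ge0 => a _; apply: sumr_ge0.
  rewrite exchange_big /= -sumr_const; apply: ler_sum => w wN.
  rewrite (eq_bigr (fun a => h w a)); last by move=> a _; rewrite hsym.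
  rewrite row //.
  by move: wN; rewrite /N /Nb inE => /andP [].
by rewrite ler_nat in key.
Qed.

End Hall1.

Section HallThm.
Variables (T : finType) (r : rel T).

Definition NY (Y B : {set T}) := [set y in Y | [exists x in B, r x y]].

Theorem hall_thm (A Y : {set T}) :
  (forall B : {set T}, B \subset A -> #|B| <= #|NY Y B|) ->
  exists g : T -> T, {in A &, injective g} /\
    (forall x, x \in A -> r x (g x) && (g x \in Y)).
Proof.
have [k] := ubnP #|A|; elim: k A Y => // k IH A Y hk HY.
rewrite ltnS in hk.
case: (boolP [exists B : {set T}, [&& B \subset A, B != set0, B != A & #|NY Y B| <= #|B|]]).
- case/existsP => B /and4P [sBA nB0 nBA tight].
  have pB : B \proper A by rewrite properEneq nBA sBA.
  have [g1 [inj1 hg1]] := IH B Y (leq_trans (proper_card pB) hk)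
       (fun C sC => HY C (subset_trans sC sBA)).
  have hA' : #|A :\: B| < k.
    apply: leq_trans hk; rewrite cardsD; move: nB0; rewrite -card_gt0.
    have -> : A :&: B = B by apply/setIidPr.
    have := subset_leq_card sBA; lia.
  have HY' : forall C : {set T}, C \subset A :\: B -> #|C| <= #|NY (Y :\: NY Y B) C|.
    move=> C sC.
    have sCB : C :|: B \subset A.
      by rewrite subUset sBA andbT; apply: subset_trans sC (subsetDl _ _).
    have := HY _ sCB.
    have dCB : [disjoint C & B].
      by apply: disjointWl sC _; rewrite disjoint_sym disjoints_subset setCD subsetUr.
    rewrite (cardsU C B) (disjoint_setI0 dCB) cards0 subn0.
    have sub : NY Y (C :|: B) \subset NY (Y :\: NY Y B) C :|: NY Y B.
      apply/subsetP => y; rewrite [y \in NY _ _]in_set => /andP [yY /existsP [x /andP [xCB rxy]]].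
      rewrite in_setU; case: (boolP (y \in NY Y B)) => hyB; first by rewrite orbT.
      rewrite orbF [y \in NY _ _]in_set in_setD hyB yY /=.
      apply/existsP; exists x; rewrite rxy andbT.
      move: xCB; rewrite in_setU => /orP [] // xB.
      by case/negP: hyB; rewrite in_set yY; apply/existsP; exists x; rewrite xB.
    have := subset_leq_card sub; have := leq_card_setU (NY (Y :\: NY Y B) C) (NY Y B).
    case => h1 _; lia.
  have [g2 [inj2 hg2]] := IH (A :\: B) (Y :\: NY Y B) hA' HY'.
  exists (fun x => if x \in B then g1 x else g2 x); split.
  + move=> x z xA zA /=.
    case: (boolP (x \in B)) => xB; case: (boolP (z \in B)) => zB.
    * exact: inj1.
    * move=> E; have := hg2 z; rewrite inE zB zA => /(_ isT) /andP [_].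
      rewrite -E inE => /andP [/negP []]; rewrite inE.
      have /andP [r1 y1] := hg1 x xB; rewrite y1 /=.
      by apply/existsP; exists x; rewrite xB.
    * move=> E; have := hg2 x; rewrite inE xB xA => /(_ isT) /andP [_].
      rewrite E inE => /andP [/negP []]; rewrite inE.
      have /andP [r1 y1] := hg1 z zB; rewrite y1 /=.
      by apply/existsP; exists z; rewrite zB.
    * by apply: inj2; rewrite inE ?xB ?zB.
  + move=> x xA; case: ifP => xB; first exact: hg1.
    have := hg2 x; rewrite in_setD xB xA => /(_ isT) /andP [-> ].
    by rewrite in_setD => /andP [].
- move/existsPn => NT.
  case: (set_0Vmem A) => [-> | [x xA]].
    by exists id; split => // z; rewrite inE.
  have := HY [set x]; rewrite sub1set xA cards1 => /(_ isT).
  rewrite card_gt0 => /set0Pn [y]; rewrite inE => /andP [yY /existsP [x' /andP [hx' rxy]]].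
  move: hx'; rewrite inE => /eqP ?; subst x'.
  have hA' : #|A :\ x| < k.
    by apply: leq_trans hk; rewrite (cardsD1 x A) xA.
  have HY' : forall C : {set T}, C \subset A :\ x -> #|C| <= #|NY (Y :\ y) C|.
    move=> C sC.
    case: (eqVneq C set0) => [-> | nC0]; first by rewrite cards0.
    have sCA : C \subset A by apply: subset_trans sC (subsetDl _ _).
    have nCA : C != A.
      apply: contraTneq sC => ->; apply/subsetPn; exists x => //.
      by rewrite !inE eqxx.
    have := NT C; rewrite sCA nC0 nCA /= -ltnNge => lt.
    have sub : NY Y C :\ y \subset NY (Y :\ y) C.
      apply/subsetP => z; rewrite !inE => /andP [zy /andP [zY ->]].
      by rewrite zy zY.
    have := subset_leq_card sub; have := leq_b1 (y \in NY Y C); move: lt; rewrite (cardsD1 y (NY Y C)); lia.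
  have [g2 [inj2 hg2]] := IH (A :\ x) (Y :\ y) hA' HY'.
  exists (fun z => if z == x then y else g2 z); split.
  + move=> z w zA wA /=.
    case: (eqVneq z x) => [-> | zx]; case: (eqVneq w x) => [-> | wx] //.
    * move=> E; have := hg2 w; rewrite in_setD1 wx wA => /(_ isT) /andP [_].
      by rewrite -E in_setD1 eqxx.
    * move=> E; have := hg2 z; rewrite in_setD1 zx zA => /(_ isT) /andP [_].
      by rewrite E in_setD1 eqxx.
    * by apply: inj2; rewrite in_setD1 ?zx ?wx.
  + move=> z zA; case: (eqVneq z x) => [-> | zx]; first by rewrite rxy yY.
    have := hg2 z; rewrite in_setD1 zx zA => /(_ isT) /andP [-> ].
    by rewrite in_setD1 => /andP [].
Qed.

End HallThm.

Section PermFpm.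
Variables (T : finType) (e : rel T) (R : realFieldType).
Hypothesis sym : forall x y, e x y = e y x.
Hypothesis irr : irreflexive e.

Lemma perm_fpm F (g : T -> T) : {in alive F &, injective g} ->
  (forall x, x \in alive F -> redge e F [set x; g x]) -> has_fpm e R F.
Proof.
move=> ginj gE.
set V := alive F.
pose cnt s := #|[set x in V | [set x; g x] == s]|.
have gV x : x \in V -> g x \in V.
  by move=> xV; have := redge_alive sym (gE x xV); case=> _ h; rewrite inE.
have gneq x : x \in V -> g x != x.
  move=> xV; have := gE x xV; rewrite (redge_set2 sym) => /andP [h _].
  by rewrite eq_sym (edge_neq irr h).
exists (fun s => (cnt s)%:R / 2%:R)%R; split.
- move=> s hs.
  have c2 : cnt s <= 2.
    case: (is_edgeP (andP hs).1) => u [w [Es _]].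
    apply: leq_trans (card_set2_le u w); rewrite -Es.
    apply: subset_leq_card; apply/subsetP => x; rewrite inE => /andP [_ /eqP <-].
    by rewrite set21.
  apply/andP; split; first by rewrite divr_ge0.
  rewrite ler_pdivrMr ?ltr0n // mul1r ler_nat //.
- move=> v hv.
  have key : \sum_(s | redge e F s && (v \in s)) cnt s = #|[set x in V | v \in [set x; g x]]|.
    rewrite -sum1dep_card.
    rewrite (partition_big (fun x => [set x; g x]) (fun s => redge e F s && (v \in s))) /=;
      last by move=> x /andP [xV vx]; rewrite gE.
    apply: eq_bigr => s /andP [_ vs]; rewrite sum1dep_card /cnt; apply: eq_card => x.
    rewrite !inE; case: (rvert F x); rewrite /= ?andbF //.
    case: eqP => [E|_]; rewrite ?andbF ?andbT //.
    by move: vs; rewrite -E !inE => ->.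
  have hv' : v \in V by rewrite inE.
  have [u uV guv] : exists2 u, u \in V & g u = v.
    have sub : g @: V \subset V by apply/subsetP => y /imsetP [x xV ->]; exact: gV.
    have : g @: V == V by rewrite eqEcard sub (card_in_imset ginj) leqnn.
    move/eqP => E; have : v \in g @: V by rewrite E.
    by case/imsetP => u uV Eu; exists u; rewrite // -Eu.
  have uv : u != v by rewrite -guv eq_sym gneq.
  have c2 : #|[set x in V | v \in [set x; g x]]| = 2.
    have -> : [set x in V | v \in [set x; g x]] = [set v; u].
      apply/setP => x; rewrite !inE; apply/idP/idP.
      - case/andP => xV /orP [/eqP -> | /eqP gx]; first by rewrite eqxx.
        have -> : x = u by apply: ginj; [by rewrite inE | exact: uV | by rewrite -gx guv].
        by rewrite eqxx orbT.
      - case/orP => /eqP ->; first by rewrite hv eqxx.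
        have uV' : rvert F u by move: uV; rewrite inE.
        by rewrite uV' guv eqxx orbT.
    by rewrite cards2 eq_sym uv.
  rewrite -mulr_suml -natr_sum key c2 divff //.
  by rewrite pnatr_eq0.
Qed.

Lemma Nb_NY F B : NY (fun x y => redge e F [set x; y]) (alive F) B = Nb e F B.
Proof. by apply/setP => w; rewrite !inE. Qed.

Lemma indep_fpm F :
  (forall I : {set T}, I \subset alive F -> [disjoint I & Nb e F I] ->
     #|I| <= #|Nb e F I|) -> has_fpm e R F.
Proof.
move=> HI.
have H : forall B : {set T}, B \subset alive F ->
    #|B| <= #|NY (fun x y => redge e F [set x; y]) (alive F) B|.
  move=> B sB; rewrite Nb_NY.
  set I := B :\: Nb e F B.
  have sub : Nb e F I \subset Nb e F B :\: B.
    apply/subsetP => w; rewrite !inE => /andP [wa /existsP [x /andP [xI rx]]].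
    move: xI; rewrite !inE => /andP [xN xB].
    rewrite wa /=; apply/andP; split.
    + apply/negP => wB; move/negP: xN; apply; rewrite (redge_alive sym rx).1 /=.
      by apply/existsP; exists w; rewrite wB redge_sym.
    + by apply/existsP; exists x; rewrite xB.
  have sI : I \subset alive F by apply: subset_trans sB; apply: subsetDl.
  have dI : [disjoint I & Nb e F I].
    rewrite disjoints_subset; apply/subsetP => x xI; rewrite inE.
    apply/negP => xN; move/subsetP: sub => /(_ x xN); rewrite inE.
    by move: xI; rewrite inE => /andP [_ ->].
  have h1 := HI I sI dI.
  have h2 := subset_leq_card sub.
  have h3 := cardsID (Nb e F B) B.
  have h4 := cardsID B (Nb e F B).
  rewrite setIC -/I in h3; lia.
have [g [ginj hg]] := hall_thm H.
apply: (perm_fpm ginj) => x xV; by case/andP: (hg x xV).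
Qed.

End PermFpm.

Section Counting.
Variables (T : finType) (e : rel T) (R : realFieldType).
Hypothesis sym : forall x y, e x y = e y x.
Hypothesis irr : irreflexive e.

Definition nbr (v : T) : {set T} := [set w | e v w].

Lemma dead_edge (F : fault T) x w : x \notin F.1 -> w \notin F.1 -> e x w ->
  ~~ redge e F [set x; w] -> [set x; w] \in F.2.
Proof.
move=> hx hw hxw; rewrite (redge_set2 sym) hxw hx hw /=.
by rewrite negbK.
Qed.

Lemma iso_deg (F : fault T) v : rvert F v -> (forall s, redge e F s -> v \notin s) ->
  #|nbr v| <= fsize F.
Proof.
move=> hv hiso; rewrite /fsize.
set N := nbr v.
have h1 : #|N :&: F.1| <= #|F.1| by apply: subset_leq_card; apply: subsetIr.
have h2 : #|N :\: F.1| <= #|F.2|.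
  rewrite -(card_imset _ (@set2_inj_at _ v)); apply: subset_leq_card.
  apply/subsetP => s /imsetP [w]; rewrite !inE => /andP [wF evw] ->.
  apply: dead_edge => //; apply/negP => /hiso; by rewrite set21.
have := cardsID F.1 N; lia.
Qed.

Lemma two_bound (F : fault T) (I S : {set T}) x y :
  I \subset alive F -> Nb e F I \subset S -> [disjoint I & S] ->
  x \in I -> y \in I -> x != y ->
  #|nbr x :|: nbr y| <= fsize F + #|S| + 1.
Proof.
move=> sI sN dIS xI yI xy.
have xa : x \notin F.1 by move/subsetP: sI => /(_ x xI); rewrite inE.
have ya : y \notin F.1 by move/subsetP: sI => /(_ y yI); rewrite inE.
have yS : y \notin S by rewrite (disjointFr dIS yI).
have inS z w : z \in I -> w \notin F.1 -> e z w -> [set z; w] \notin F.2 -> w \in S.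
  move=> zI wa ezw nF; move/subsetP: sN; apply; rewrite inE /rvert wa /=.
  apply/existsP; exists z; rewrite zI /= (redge_set2 sym) ezw wa nF andbT.
  by rewrite andbT; move/subsetP: sI => /(_ z zI); rewrite inE.
set U := nbr x :|: nbr y.
set K := U :\: S :\: [set x; y].
set Kv := K :&: F.1.
set Ke := K :\: F.1.
pose h w := if [set x; w] \in F.2 then [set x; w] else [set y; w].
have hF w : w \in Ke -> h w \in F.2.
  rewrite /Ke /K !inE => /andP [wa /andP [/norP [wx wy] /andP [wS wU]]].
  rewrite /h; case: ifP => // nx.
  have wy' : e y w.
    move: wU => /orP [] // exw.
    by move: wS; rewrite (inS x w xI wa exw (negbT nx)).
  by apply/negPn/negP => ny; move: wS; rewrite (inS y w yI wa wy').
have hinj : {in Ke &, injective h}.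
  move=> w w' wK w'K; move: wK w'K; rewrite /Ke /K !inE.
  move=> /andP [_ /andP [/norP [wx wy] _]] /andP [_ /andP [/norP [w'x w'y] _]].
  rewrite /h; case: ifP => _; case: ifP => _ E.
  - exact: set2_same E.
  - case: (set2_eq E) => [[ex _]|[ex ew]]; first by move/eqP: xy.
    by move/eqP: wy; rewrite ew.
  - case: (set2_eq E) => [[ex _]|[ex ew]]; first by move: xy; rewrite ex eqxx.
    by move/eqP: wx; rewrite ew.
  - exact: set2_same E.
have c2 : #|Ke| + e x y <= #|F.2|.
  case exy: (e x y); last first.
    rewrite addn0 -(card_in_imset hinj); apply: subset_leq_card.
    by apply/subsetP => s /imsetP [w wK ->]; apply: hF.
  have xyF : [set x; y] \in F.2.
    by apply/negPn/negP => nF; move: yS; rewrite (inS x y xI ya exy nF).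
  have nxy : [set x; y] \notin h @: Ke.
    apply/imsetP => [[w wK E]]; move: wK; rewrite /Ke /K !inE => /andP [_ /andP [/norP [wx wy] _]].
    move: E; rewrite /h; case: ifP => _ E.
    - by move/eqP: wy; rewrite (set2_same E).
    - case: (set2_eq E) => [[ex _]|[ex _]]; first by move: xy; rewrite ex eqxx.
      by move/eqP: wx; rewrite ex.
  rewrite addn1 -(card_in_imset hinj).
  have sub : [set x; y] |: (h @: Ke) \subset F.2.
    rewrite subUset sub1set xyF /=; apply/subsetP => s /imsetP [w wK ->]; exact: hF.
  have := subset_leq_card sub; rewrite cardsU1 nxy; done.
have c1 : #|Kv| <= #|F.1| by apply: subset_leq_card; apply: subsetIr.
have cK : #|K| = #|Kv| + #|Ke| by rewrite /Kv /Ke cardsID.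
have cU : #|U| <= #|K| + #|S| + 2 * e x y.
  have sub : U \subset K :|: S :|: (if e x y then [set x; y] else set0).
    apply/subsetP => w wU; rewrite in_setU; apply/orP.
    case: (boolP (w \in [set x; y])) => wxy.
    - right; have hxy : e x y.
        move: wxy wU; rewrite /U /nbr !inE => /orP [] /eqP ->; rewrite ?irr /= ?orbF => hh //.
        by rewrite sym.
      by rewrite hxy.
    - left; rewrite in_setU; case: (boolP (w \in S)) => wS; first by rewrite orbT.
      by rewrite /K !in_setD wxy wS wU.
  apply: leq_trans (subset_leq_card sub) _.
  apply: leq_trans (leq_card_setU _ _).1 _.
  apply: leq_add; first by apply: leq_trans (leq_card_setU _ _).1 _.
  by case: (e x y); rewrite ?cards0 ?card_set2_le.
rewrite /fsize; case: (e x y) cU c2; lia.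
Qed.

Definition star (v : T) : fault T := (set0, [set [set v; w] | w in nbr v]).

Lemma star_valid v : valid_fault e (star v).
Proof.
move=> s /imsetP [w]; rewrite inE => evw ->; by rewrite (is_edge_set2 sym).
Qed.

Lemma star_size v : fsize (star v) = #|nbr v|.
Proof. by rewrite /fsize /= cards0 (card_imset _ (@set2_inj_at _ v)). Qed.

Lemma star_nofpm v : ~ has_fpm e R (star v).
Proof.
case=> f [_ fs]; have := fs v; rewrite /rvert inE => /(_ isT).
rewrite big_pred0; first by move/eqP; rewrite eq_sym oner_eq0.
move=> s; apply/negP => /andP [hr vs].
case: (edge_at sym (andP hr).1 vs) => w [Es evw].
have hin : [set v; w] \in (star v).2 by apply: imset_f; rewrite inE.
by move: hr; rewrite /redge Es hin /= !andbF.
Qed.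

End Counting.

Section GenSide.
Variables (T : finType) (e : rel T) (R : realFieldType) (delta : nat).
Hypothesis sym : forall x y, e x y = e y x.
Hypothesis irr : irreflexive e.
Hypothesis Hfpm : forall F, valid_fault e F -> fsize F < delta -> has_fpm e R F.

Lemma gen (Fk : fault T) (I S : {set T}) (F' : fault T) (W : {set T}) :
  valid_fault e Fk -> I \subset alive Fk -> [disjoint I & S] -> Nb e Fk I \subset S ->
  F'.1 \subset Fk.1 -> F'.2 \subset Fk.2 -> W \subset S -> fsize F' + #|W| < delta ->
  #|I| + #|W| <= #|S| + #|Fk.1 :\: F'.1| + 2 * #|Fk.2 :\: F'.2|.
Proof.
move=> vF sI dIS sN s1 s2 sW hsz.
pose F'' : fault T := (F'.1 :|: W, F'.2).
have vF'' : valid_fault e F''.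
  by move=> s hs; apply: vF; move/subsetP: s2; apply.
have sz : fsize F'' < delta.
  apply: leq_ltn_trans hsz; rewrite /fsize /=.
  have := (leq_card_setU F'.1 W).1; lia.
have fp := Hfpm vF'' sz.
have sI'' : I \subset alive F''.
  apply/subsetP => x xI; rewrite inE /rvert /= in_setU negb_or.
  have := (disjointFr dIS xI) => xS.
  apply/andP; split.
  - have xa : x \notin Fk.1 by move/subsetP: sI => /(_ x xI); rewrite inE.
    by apply/negP => /(subsetP s1) h; move/negP: xa.
  - by apply/negP => /(subsetP sW) h; move/negP: xS.
have hall := fpm_hall sym fp sI''.
set Z1 := Fk.1 :\: F'.1.
set Z2 := Fk.2 :\: F'.2.
have sub : Nb e F'' I \subset (S :\: W) :|: Z1 :|: cover Z2.
  apply/subsetP => w; rewrite inE => /andP [wa /existsP [x /andP [xI hr]]].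
  move: wa; rewrite /rvert /= in_setU negb_or => /andP [w1 wW].
  have xa : x \notin Fk.1 by move/subsetP: sI => /(_ x xI); rewrite inE.
  move: hr; rewrite (redge_set2 sym) /= => /and4P [exw _ _ nF2].
  case: (boolP (w \in Fk.1)) => wF.
    by rewrite !inE wF w1 orbT.
  case: (boolP ([set x; w] \in Fk.2)) => eF.
    apply/setUP; right; apply/bigcupP; exists [set x; w]; last by rewrite set22.
    by rewrite inE eF nF2.
  have wS : w \in S.
    move/subsetP: sN; apply; rewrite inE /rvert wF /=; apply/existsP; exists x.
    by rewrite xI /= (redge_set2 sym) exw xa wF eF.
  by rewrite !inE wS wW.
have cZ2 : #|cover Z2| <= 2 * #|Z2|.
  apply: leq_trans (leq_card_cover Z2).1 _.
  rewrite mulnC -sum_nat_const; apply: leq_sum => s sZ.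
  have : s \in Fk.2 by move: sZ; rewrite inE => /andP [].
  move/vF => /is_edgeP [u [v [-> _]]]; exact: card_set2_le.
have cSW : #|S :\: W| = #|S| - #|W|.
  by rewrite cardsD (setIidPr sW).
have cW : #|W| <= #|S| by apply: subset_leq_card.
have := subset_leq_card sub.
have := (leq_card_setU (S :\: W :|: Z1) (cover Z2)).1.
have := (leq_card_setU (S :\: W) Z1).1.
lia.
Qed.

End GenSide.

Fixpoint allseqs (n : nat) : seq (seq bool) :=
  if n is n'.+1 then map (cons false) (allseqs n') ++ map (cons true) (allseqs n') else [:: [::]].

Lemma mem_allseqs n s : (s \in allseqs n) = (size s == n).
Proof.
elim: n s => [|n IH] [|b s] //=.
- by rewrite mem_cat; apply/negP => /orP []; case/mapP.
- rewrite mem_cat eqSS -IH.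
  apply/idP/idP.
  + by case/orP => /mapP [t ht [_ ->]].
  + by case: b => h; apply/orP; [right|left]; apply/mapP; exists s.
Qed.

Lemma uniq_allseqs n : uniq (allseqs n).
Proof.
elim: n => [|n IH] //=; rewrite cat_uniq.
have i0 : injective (cons false) by move=> s t [].
have i1 : injective (cons true) by move=> s t [].
rewrite (map_inj_uniq i0) (map_inj_uniq i1) IH andbT /=.
apply/hasPn => s /mapP [t _ ->]; apply/negP.
by case/mapP => u _ [].
Qed.

Lemma card_count (T : finType) (Q : pred T) : #|[set y | Q y]| = count Q (enum T).
Proof.
rewrite cardsE cardE /enum_mem size_filter count_filter.
by apply: eq_count => x; rewrite /= ?inE ?andbT.
Qed.

Lemma card_tuple4 (P : pred (seq bool)) :
  #|[set y : 4.-tuple bool | P (tval y)]| = count P (allseqs 4).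
Proof.
rewrite card_count -(count_map (@tval 4 bool) P).
apply/permP; apply: uniq_perm.
- by rewrite map_inj_uniq ?enum_uniq //; apply: val_inj.
- exact: uniq_allseqs.
- move=> s; rewrite mem_allseqs; apply/mapP/idP => [[t _ ->]|hs].
  + by rewrite size_tuple.
  + by exists (Tuple hs); rewrite ?mem_enum.
Qed.

Lemma tuple4_mem (x : 4.-tuple bool) : tval x \in allseqs 4.
Proof. by rewrite mem_allseqs size_tuple. Qed.

Definition L4 := allseqs 4.

Lemma aq_sym_chk : all (fun u => all (fun v => aq u v == aq v u) L4) L4.
Proof. by vm_compute. Qed.
Lemma aq_irr_chk : all (fun u => ~~ aq u u) L4.
Proof. by vm_compute. Qed.
Lemma aq_deg_chk : all (fun u => count (aq u) L4 == 7) L4.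
Proof. by vm_compute. Qed.
Lemma aq_com_chk : all (fun u => all (fun v => (u == v) || (count (fun w => aq u w && aq v w) L4 <= 4)) L4) L4.
Proof. by vm_compute. Qed.

Definition gprops (m : nat) (T : finType) (e : rel T) : Prop :=
  [/\ forall x y, e x y = e y x, irreflexive e,
      forall v, #|nbr e v| = 2 * m - 1,
      forall u v, u != v -> #|nbr e u :&: nbr e v| <= 2 * m - 4
    & 0 < #|T|].

Lemma gprops_AQ4 : gprops 4 AQ4.
Proof.
split.
- move=> x y; have := allP aq_sym_chk _ (tuple4_mem x).
  by move/allP => /(_ _ (tuple4_mem y)) /eqP.
- move=> x; have := allP aq_irr_chk _ (tuple4_mem x); rewrite /AQ4.
  by move/negbTE.
- move=> v; rewrite /nbr /AQ4 (card_tuple4 (aq v)).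
  by have := allP aq_deg_chk _ (tuple4_mem v) => /eqP.
- move=> u v uv.
  have -> : nbr AQ4 u :&: nbr AQ4 v = [set y : 4.-tuple bool | aq u y && aq v y].
    by apply/setP => y; rewrite !inE.
  rewrite (card_tuple4 (fun w => aq u w && aq v w)).
  have := allP aq_com_chk _ (tuple4_mem u) => /allP /(_ _ (tuple4_mem v)).
  by rewrite (inj_eq val_inj) (negbTE uv).
- by rewrite card_tuple card_bool.
Qed.

Lemma gprops_transport m (T T' : finType) (e : rel T) (e' : rel T') (f : T' -> T) :
  bijective f -> (forall x y, e (f x) (f y) = e' x y) -> gprops m e' -> gprops m e.
Proof.
move=> bf Hf [s' i' d' c' n'].
have finj : injective f := bij_inj bf.
case: bf => g fg gf.
have nbrE x : nbr e (f x) = f @: nbr e' x.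
  apply/setP => w; rewrite -{1}(gf w) inE Hf.
  apply/idP/imsetP => [h | [z hz ->]].
    by exists (g w); rewrite ?inE ?gf.
  by move: hz; rewrite inE fg.
split.
- by move=> x y; rewrite -(gf x) -(gf y) !Hf s'.
- by move=> x; rewrite -(gf x) Hf i'.
- by move=> v; rewrite -(gf v) nbrE card_imset.
- move=> u v uv; rewrite -(gf u) -(gf v) !nbrE -imsetI; last by move=> ? ? _ _; apply: finj.
  rewrite card_imset //; apply: c'.
  by apply: contraNneq uv => E; rewrite -(gf u) -(gf v) E.
- by rewrite -(bij_eq_card (Bijective fg gf)).
Qed.

Section Join.
Variables (m : nat) (T1 T2 : finType) (e1 : rel T1) (e2 : rel T2) (m1 m2 : T1 -> T2).
Hypothesis m5 : 5 <= m.
Hypothesis G1 : gprops m.-1 e1.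
Hypothesis G2 : gprops m.-1 e2.
Hypothesis bm1 : bijective m1.
Hypothesis bm2 : bijective m2.
Hypothesis hne : forall a, m1 a != m2 a.

Let J := gaq_join e1 e2 m1 m2.
Let P1 (p : T1 + T2) : {set T1} := [set x | J p (inl x)].
Let P2 (p : T1 + T2) : {set T2} := [set y | J p (inr y)].

Let bid : bijective (@id (T1 + T2)). Proof. by exists id. Qed.

Lemma card_nbrJ p : #|nbr J p| = #|P1 p| + #|P2 p|.
Proof. by rewrite (card_sum_split _ bid); congr (_ + _); apply: eq_card => x; rewrite !inE. Qed.

Lemma card_comJ p q : #|nbr J p :&: nbr J q| = #|P1 p :&: P1 q| + #|P2 p :&: P2 q|.
Proof. by rewrite (card_sum_split _ bid); congr (_ + _); apply: eq_card => x; rewrite !inE. Qed.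

Lemma P1l a : P1 (inl a) = nbr e1 a.
Proof. by apply/setP => x; rewrite !inE. Qed.
Lemma P2r b : P2 (inr b) = nbr e2 b.
Proof. by apply/setP => x; rewrite !inE. Qed.
Lemma P2l a : P2 (inl a) = [set m1 a; m2 a].
Proof. by apply/setP => y; rewrite !inE /J /= ![_ == y]eq_sym. Qed.
Lemma P1r b : exists c d, c != d /\ P1 (inr b) = [set c; d].
Proof.
case: bm1 => g1 c1 c1'; case: bm2 => g2 c2 c2'.
exists (g1 b), (g2 b); split.
  apply/eqP => E; move: (hne (g1 b)); rewrite c1' E c2' eqxx //.
apply/setP => x; rewrite !inE /J /=.
apply/idP/idP => [/orP [] /eqP <-|/orP [] /eqP ->].
- by rewrite c1 eqxx.
- by rewrite c2 eqxx orbT.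
- by rewrite c1' eqxx.
- by rewrite c2' eqxx orbT.
Qed.

Lemma cP2l a : #|P2 (inl a)| = 2.
Proof. by rewrite P2l cards2 hne. Qed.
Lemma cP1r b : #|P1 (inr b)| = 2.
Proof. by case: (P1r b) => c [d [cd ->]]; rewrite cards2 cd. Qed.

Lemma gprops_join : gprops m J.
Proof.
case: G1 => s1 i1 d1 c1 n1; case: G2 => s2 i2 d2 c2 n2.
rewrite -subn1 in d1 c1 d2 c2.
split.
- by case=> [a|b] [a'|b'] //=; rewrite ?s1 ?s2.
- by case=> [a|b] /=; rewrite ?i1 ?i2.
- case=> [a|b]; rewrite card_nbrJ.
  + rewrite P1l d1 cP2l; lia.
  + rewrite P2r d2 cP1r; lia.
- move=> p q pq; rewrite card_comJ.
  have le1 (A B : {set T1}) : #|A :&: B| <= #|A| by apply: subset_leq_card; apply: subsetIl.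
  have le1' (A B : {set T1}) : #|A :&: B| <= #|B| by apply: subset_leq_card; apply: subsetIr.
  have le2 (A B : {set T2}) : #|A :&: B| <= #|A| by apply: subset_leq_card; apply: subsetIl.
  have le2' (A B : {set T2}) : #|A :&: B| <= #|B| by apply: subset_leq_card; apply: subsetIr.
  case: p q pq => [a|b] [a'|b'] pq.
  + have aa : a != a' by apply: contraNneq pq => ->.
    have := c1 a a' aa; rewrite -!P1l => h.
    have := le2 (P2 (inl a)) (P2 (inl a')); rewrite cP2l; lia.
  + have := le1' (P1 (inl a)) (P1 (inr b')); rewrite cP1r.
    have := le2 (P2 (inl a)) (P2 (inr b')); rewrite cP2l; lia.
  + have := le1 (P1 (inr b)) (P1 (inl a')); rewrite cP1r.
    have := le2' (P2 (inr b)) (P2 (inl a')); rewrite cP2l; lia.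
  + have bb : b != b' by apply: contraNneq pq => ->.
    have := c2 b b' bb; rewrite -!P2r => h.
    have := le1 (P1 (inr b)) (P1 (inr b')); rewrite cP1r; lia.
- by rewrite card_sum; lia.
Qed.

End Join.

Lemma GAQ_props m (T : finType) (e : rel T) : GAQ m e -> gprops m e /\ 4 <= m.
Proof.
elim => [T0 e0 g bg He | n T0 T1 T2 e0 e1 e2 f m1 m2 n5 _ [IH1 _] _ [IH2 _] bf bm1 bm2 hne Hf].
- split => //.
  case: bg => h gh hg.
  apply: (@gprops_transport 4 _ _ e0 AQ4 h); first by exists g.
    by move=> x y; rewrite He !hg.
  exact: gprops_AQ4.
- split; last by lia.
  apply: (gprops_transport bf Hf).
  exact: gprops_join.
Qed.

Lemma exists_sub (T : finType) (A : {set T}) k : k <= #|A| -> exists2 B : {set T}, B \subset A & #|B| = k.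
Proof.
elim: k => [|k IH] h; first by exists set0; rewrite ?sub0set ?cards0.
case: (IH (ltnW h)) => B sB cB.
have : 0 < #|A :\: B| by rewrite cardsD (setIidPr sB); lia.
rewrite card_gt0 => /set0Pn [x]; rewrite inE => /andP [xB xA].
exists (x |: B); first by rewrite subUset sub1set xA sB.
by rewrite cardsU1 xB cB.
Qed.

Lemma two_elems (T : finType) (A : {set T}) : 1 < #|A| -> exists x y, [/\ x \in A, y \in A & x != y].
Proof.
move=> h; have : 0 < #|A| by lia.
rewrite card_gt0 => /set0Pn [x xA].
have : 0 < #|A :\ x| by move: h; rewrite (cardsD1 x A) xA; lia.
rewrite card_gt0 => /set0Pn [y]; rewrite inE => /andP [yx yA].
by exists x, y; split => //; move: yx; rewrite inE eq_sym.
Qed.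

Lemma cardsD_sub (T : finType) (A B : {set T}) : B \subset A -> #|A :\: B| = #|A| - #|B|.
Proof. by move=> sB; rewrite cardsD (setIidPr sB). Qed.

Section Side.
Variables (T Tk : finType) (e : rel T) (ek : rel Tk) (R : realFieldType) (n : nat) (iota : Tk -> T).
Hypothesis esym : forall x y, e x y = e y x.
Hypothesis eirr : irreflexive e.
Hypothesis iinj : injective iota.
Hypothesis Hi : forall x y, e (iota x) (iota y) = ek x y.
Hypothesis Gk : gprops n.-1 ek.
Hypothesis n5 : 5 <= n.
Hypothesis Hfpm : forall F, valid_fault ek F -> fsize F < 2 * n - 3 -> has_fpm ek R F.

Definition sideF (F : fault T) : fault Tk :=
  ([set x | iota x \in F.1], [set s | is_edge ek s && (iota @: s \in F.2)]).

Lemma eksym : forall x y, ek x y = ek y x. Proof. by case: Gk. Qed.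
Lemma ekirr : irreflexive ek. Proof. by case: Gk. Qed.

Lemma side_valid F : valid_fault ek (sideF F).
Proof. by move=> s; rewrite inE => /andP []. Qed.

Lemma side_redge F x w : redge ek (sideF F) [set x; w] = redge e F [set iota x; iota w].
Proof.
rewrite (redge_set2 eksym) (redge_set2 esym) Hi /= !inE (is_edge_set2 eksym).
case: (ek x w) => //=.
by rewrite imsetU1 imset_set1.
Qed.

Variables (F : fault T) (I : {set T}).
Hypothesis sI : I \subset alive F.
Hypothesis dI : [disjoint I & Nb e F I].

Let S := Nb e F I.
Definition Ik := [set x | iota x \in I].
Definition Sk := [set x | iota x \in S].
Let Fk := sideF F.

Lemma side_alive : Ik \subset alive Fk.
Proof.
apply/subsetP => x; rewrite !inE /rvert /= inE => xI.
by move/subsetP: sI => /(_ _ xI); rewrite inE.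
Qed.

Lemma side_disj : [disjoint Ik & Sk].
Proof.
rewrite disjoints_subset; apply/subsetP => x; rewrite in_set => xI.
by rewrite in_setC in_set (disjointFr dI xI).
Qed.

Lemma side_Nb : Nb ek Fk Ik \subset Sk.
Proof.
apply/subsetP => w; rewrite !inE /rvert /= inE => /andP [wa /existsP [x /andP [xI hr]]].
rewrite wa /=; apply/existsP; exists (iota x); move: xI; rewrite inE => ->.
by rewrite -side_redge.
Qed.

Let delta := 2 * n - 3.

Lemma side_P : fsize Fk <= delta - 1 -> #|Ik| + minn (delta - 1 - fsize Fk) #|Sk| <= #|Sk|.
Proof.
move=> h.
have [W sW cW] := exists_sub (geq_minr (delta - 1 - fsize Fk) #|Sk|).
have := gen eksym Hfpm (@side_valid F) side_alive side_disj side_Nb (subxx Fk.1) (subxx Fk.2) sW.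
rewrite !setDv !cards0 cW => H.
have H' : fsize Fk + minn (delta - 1 - fsize Fk) #|Sk| < delta.
  have := geq_minl (delta - 1 - fsize Fk) #|Sk|; rewrite /delta in h *; lia.
have := H H'; lia.
Qed.

Lemma side_D : delta - 1 <= fsize Fk -> #|Ik| <= #|Sk| + 2 * (fsize Fk - (delta - 1)).
Proof.
move=> h.
have hm1 := geq_minl #|Fk.1| (delta - 1).
have hm2 := geq_minr #|Fk.1| (delta - 1).
have [A1 sA1 cA1] := exists_sub hm1.
have h2 : delta - 1 - minn #|Fk.1| (delta - 1) <= #|Fk.2|.
  by move: h hm1 hm2; rewrite /fsize; lia.
have [A2 sA2 cA2] := exists_sub h2.
have := gen eksym Hfpm (@side_valid F) side_alive side_disj side_Nb (F' := (A1, A2)) sA1 sA2 (sub0set Sk).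
move=> H.
have H' : fsize (A1, A2) + #|@set0 Tk| < delta.
  rewrite /fsize /= cA1 cA2 cards0; move: h hm1 hm2; rewrite /delta; lia.
have := H H'; rewrite cards0 /= (cardsD_sub sA1) (cardsD_sub sA2) cA1 cA2.
move: h hm1 hm2; rewrite /fsize /delta; lia.
Qed.

Lemma side_T : 1 < #|Ik| -> 2 * n <= fsize Fk + #|Sk| + 1.
Proof.
case/two_elems => x [y [xI yI xy]].
have := two_bound eksym ekirr side_alive side_Nb side_disj xI yI xy.
case: Gk => _ _ dk ck _.
have := ck x y xy; have := cardsUI (nbr ek x) (nbr ek y); rewrite !dk.
lia.
Qed.

End Side.

Lemma card_disjU (T : finType) (A B : {set T}) : [disjoint A & B] -> #|A :|: B| = #|A| + #|B|.
Proof. by move=> d; apply/eqP; rewrite (leq_card_setU A B).2. Qed.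

Lemma arith (n a b c i1 i2 s1 s2 : nat) :
 5 <= n -> a + b + c <= 2*n - 1 ->
 (a <= 2*n-3-1 -> i1 + minn (2*n-3-1-a) s1 <= s1) ->
 (2*n-3-1 <= a -> i1 <= s1 + 2*(a - (2*n-3-1))) ->
 (1 < i1 -> 2*n <= a + s1 + 1) ->
 (b <= 2*n-3-1 -> i2 + minn (2*n-3-1-b) s2 <= s2) ->
 (2*n-3-1 <= b -> i2 <= s2 + 2*(b - (2*n-3-1))) ->
 (1 < i2 -> 2*n <= b + s2 + 1) ->
 i1 <= s2 + b + c -> i2 <= s1 + a + c ->
 (0 < i1 + i2 -> 0 < s1 + s2) ->
 i1 + i2 <= s1 + s2.
Proof. lia. Qed.

Section Cross.
Variables (T Tk To : finType) (e : rel T) (ik : Tk -> T) (io : To -> T) (rho : Tk -> To).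
Hypothesis esym : forall x y, e x y = e y x.
Hypothesis ikinj : injective ik.
Hypothesis ioinj : injective io.
Hypothesis rhoinj : injective rho.
Hypothesis kneo : forall x y, ik x != io y.
Hypothesis Erho : forall x, e (ik x) (io (rho x)).

Lemma cross_bound (F : fault T) (I : {set T}) (C : {set {set T}}) :
  (forall x, [set ik x; io (rho x)] \in F.2 -> [set ik x; io (rho x)] \in C) ->
  I \subset alive F ->
  #|[set x | ik x \in I]| <=
    #|[set y | io y \in Nb e F I]| + #|[set y | io y \in F.1]| + #|C|.
Proof.
move=> HC sI.
set Ik := [set x | ik x \in I].
set A := [set x in Ik | io (rho x) \in Nb e F I].
set B := [set x in Ik | io (rho x) \in F.1].
set D := [set x in Ik | [set ik x; io (rho x)] \in F.2].
have sub : Ik \subset A :|: B :|: D.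
  apply/subsetP => x xI; have xI' : ik x \in I by move: xI; rewrite inE.
  rewrite !in_setU /A /B /D !inE xI' /=.
  case: (boolP (io (rho x) \in F.1)) => h1; first by rewrite orbT.
  case: (boolP ([set ik x; io (rho x)] \in F.2)) => h2; first by rewrite !orbT.
  rewrite !orbF /rvert h1 /=; apply/existsP; exists (ik x).
  rewrite xI' (redge_set2 esym) Erho h1 h2 /= andbT.
  by move/(subsetP sI): xI'; rewrite inE.
have cA : #|A| <= #|[set y | io y \in Nb e F I]|.
  rewrite -(card_imset _ rhoinj); apply: subset_leq_card; apply/subsetP => y.
  by case/imsetP => x; rewrite /A inE => /andP [_ h] ->; rewrite inE.
have cB : #|B| <= #|[set y | io y \in F.1]|.
  rewrite -(card_imset _ rhoinj); apply: subset_leq_card; apply/subsetP => y.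
  by case/imsetP => x; rewrite /B inE => /andP [_ h] ->; rewrite inE.
have dinj : injective (fun x => [set ik x; io (rho x)]).
  move=> x x' E; have : ik x \in [set ik x'; io (rho x')] by rewrite -E set21.
  case/set2P => [/ikinj //|h]; by move: (kneo x (rho x')); rewrite h eqxx.
have cD : #|D| <= #|C|.
  rewrite -(card_imset _ dinj); apply: subset_leq_card; apply/subsetP => s.
  by case/imsetP => x; rewrite /D inE => /andP [_ h] ->; apply: HC.
have := subset_leq_card sub.
have := (leq_card_setU (A :|: B) D).1; have := (leq_card_setU A B).1.
lia.
Qed.

End Cross.

Section KL.
Variables (n : nat) (T T1 T2 : finType) (e : rel T) (e1 : rel T1) (e2 : rel T2).
Variables (f : T1 + T2 -> T) (m1 m2 : T1 -> T2) (R : realFieldType).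
Hypothesis n5 : 5 <= n.
Hypothesis bf : bijective f.
Hypothesis bm1 : bijective m1.
Hypothesis bm2 : bijective m2.
Hypothesis Hf : forall x y, e (f x) (f y) = gaq_join e1 e2 m1 m2 x y.
Hypothesis G1 : gprops n.-1 e1.
Hypothesis G2 : gprops n.-1 e2.
Hypothesis Ge : gprops n e.
Hypothesis Hfpm1 : forall F, valid_fault e1 F -> fsize F < 2 * n - 3 -> has_fpm e1 R F.
Hypothesis Hfpm2 : forall F, valid_fault e2 F -> fsize F < 2 * n - 3 -> has_fpm e2 R F.

Let i1 (x : T1) := f (inl x).
Let i2 (y : T2) := f (inr y).

Let finj : injective f := bij_inj bf.
Lemma i1inj : injective i1. Proof. by move=> x y /finj []. Qed.
Lemma i2inj : injective i2. Proof. by move=> x y /finj []. Qed.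
Lemma i12 x y : i1 x != i2 y. Proof. by apply/eqP => /finj. Qed.
Lemma esym : forall x y, e x y = e y x. Proof. by case: Ge. Qed.
Lemma eirr : irreflexive e. Proof. by case: Ge. Qed.
Lemma He1 x y : e (i1 x) (i1 y) = e1 x y. Proof. by rewrite /i1 Hf. Qed.
Lemma He2 x y : e (i2 x) (i2 y) = e2 x y. Proof. by rewrite /i2 Hf. Qed.

Definition crossF (F : fault T) : {set {set T}} :=
  [set s in F.2 | [exists x, exists y, s == [set i1 x; i2 y]]].

Lemma fsize_split (F : fault T) :
  fsize (sideF e1 i1 F) + fsize (sideF e2 i2 F) + #|crossF F| <= fsize F.
Proof.
rewrite /fsize /=.
have c1 := card_sum_split F.1 bf.
set E1 := [set s | is_edge e1 s && (i1 @: s \in F.2)].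
set E2 := [set s | is_edge e2 s && (i2 @: s \in F.2)].
have inj1 : injective (fun s : {set T1} => i1 @: s) := imset_inj i1inj.
have inj2 : injective (fun s : {set T2} => i2 @: s) := imset_inj i2inj.
set X1 := [set i1 @: s | s : {set T1} in E1].
set X2 := [set i2 @: s | s : {set T2} in E2].
have cX1 : #|X1| = #|E1| by rewrite card_imset.
have cX2 : #|X2| = #|E2| by rewrite card_imset.
have ne1 (s : {set T1}) : s \in E1 -> exists x, x \in s.
  rewrite inE => /andP [/is_edgeP [u [v [-> _]]] _]; exists u; exact: set21.
have ne2 (s : {set T2}) : s \in E2 -> exists x, x \in s.
  rewrite inE => /andP [/is_edgeP [u [v [-> _]]] _]; exists u; exact: set21.
have d12 : [disjoint X1 & X2].
  rewrite disjoints_subset; apply/subsetP => t /imsetP [s sE ->]; rewrite inE.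
  apply/imsetP => [[s' sE' E]]; case: (ne1 _ sE) => x xs.
  have : i1 x \in i2 @: s' by rewrite -E imset_f.
  by case/imsetP => y _ /eqP; rewrite (negbTE (i12 x y)).
have d3 : [disjoint X1 :|: X2 & crossF F].
  rewrite disjoints_subset; apply/subsetP => t; rewrite inE => /orP [] /imsetP [s sE ->];
    rewrite !inE; apply/negP => /andP [_ /existsP [x /existsP [y /eqP E]]].
  - have : i2 y \in i1 @: s by rewrite E set22.
    by case/imsetP => z _ /eqP; rewrite eq_sym (negbTE (i12 z y)).
  - have : i1 x \in i2 @: s by rewrite E set21.
    by case/imsetP => z _ /eqP; rewrite (negbTE (i12 x z)).
have sub : X1 :|: X2 :|: crossF F \subset F.2.
  rewrite !subUset; apply/andP; split; [apply/andP; split|].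
  - by apply/subsetP => t /imsetP [s]; rewrite inE => /andP [_ h] ->.
  - by apply/subsetP => t /imsetP [s]; rewrite inE => /andP [_ h] ->.
  - by apply/subsetP => t; rewrite inE => /andP [].
have := subset_leq_card sub.
rewrite (card_disjU d3) (card_disjU d12) cX1 cX2.
rewrite c1 /i1 /i2; set a1 := #|[set x | f (inl x) \in F.1]|; set a2 := #|[set x | f (inr x) \in F.1]|; set x1 := #|E1|; set x2 := #|E2|; set x3 := #|crossF F|; set x4 := #|F.2|; lia.
Qed.

Lemma iso_S (F : fault T) (I : {set T}) : ~ has_isolated e F -> I \subset alive F ->
  0 < #|I| -> 0 < #|Nb e F I|.
Proof.
move=> niso sI; rewrite !card_gt0 => /set0Pn [v vI].
have va : rvert F v by move/subsetP: sI => /(_ v vI); rewrite inE.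
case: (boolP [exists s, redge e F s && (v \in s)]) => [/existsP [s /andP [hr vs]]|H].
  case: (edge_at esym (andP hr).1 vs) => w [Es _]; rewrite Es in hr.
  apply/set0Pn; exists w; rewrite inE (redge_alive esym hr).2 /=.
  by apply/existsP; exists v; rewrite vI hr.
case: niso; exists v; split => // s hr; apply/negP => vs.
by move/existsPn: H => /(_ s); rewrite hr vs.
Qed.

Lemma KL (F : fault T) : valid_fault e F -> fsize F <= 2 * n - 1 ->
  ~ has_isolated e F -> has_fpm e R F.
Proof.
move=> vF sz niso; apply: (indep_fpm R esym eirr) => I sI dI.
have m1inj : injective m1 := bij_inj bm1.
case: bm1 => m1' c1 c1'.
have m1'inj : injective m1' := can_inj c1'.
have P1 := side_P esym He1 G1 n5 Hfpm1 sI dI.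
have D1 := side_D esym He1 G1 n5 Hfpm1 sI dI.
have Tw1 := side_T esym He1 G1 n5 sI dI.
have P2 := side_P esym He2 G2 n5 Hfpm2 sI dI.
have D2 := side_D esym He2 G2 n5 Hfpm2 sI dI.
have Tw2 := side_T esym He2 G2 n5 sI dI.
have E1 x : e (i1 x) (i2 (m1 x)) by rewrite /i1 /i2 Hf /= eqxx.
have E2 y : e (i2 y) (i1 (m1' y)) by rewrite /i1 /i2 Hf /= c1' eqxx.
have HC1 x : [set i1 x; i2 (m1 x)] \in F.2 -> [set i1 x; i2 (m1 x)] \in crossF F.
  by move=> h; rewrite inE h /=; apply/existsP; exists x; apply/existsP; exists (m1 x).
have HC2 y : [set i2 y; i1 (m1' y)] \in F.2 -> [set i2 y; i1 (m1' y)] \in crossF F.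
  move=> h; rewrite inE h /=; apply/existsP; exists (m1' y); apply/existsP; exists y.
  by rewrite setUC.
have k21 y x : i2 y != i1 x by rewrite eq_sym i12.
have C1 := cross_bound esym i1inj m1inj i12 E1 HC1 sI.
have C2 := cross_bound esym i2inj m1'inj k21 E2 HC2 sI.
have Fs := fsize_split F.
have iso := iso_S niso sI.
have cI := card_sum_split I bf.
have cS := card_sum_split (Nb e F I) bf.
have F11 : #|[set x | i1 x \in F.1]| <= fsize (sideF e1 i1 F) by rewrite /fsize /= leq_addr.
have F21 : #|[set y | i2 y \in F.1]| <= fsize (sideF e2 i2 F) by rewrite /fsize /= leq_addr.
rewrite cI cS.
set a := fsize (sideF e1 i1 F) in P1 D1 Tw1 Fs F11 *.
set b := fsize (sideF e2 i2 F) in P2 D2 Tw2 Fs F21 *.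
set c := #|crossF F| in C1 C2 Fs *.
set j1 := #|[set x | f (inl x) \in I]| in C1 P1 D1 Tw1 *.
set j2 := #|[set x | f (inr x) \in I]| in C2 P2 D2 Tw2 *.
set t1 := #|[set x | f (inl x) \in Nb e F I]| in C2 P1 D1 Tw1 *.
set t2 := #|[set x | f (inr x) \in Nb e F I]| in C1 P2 D2 Tw2 *.
set g1 := #|[set x | f (inl x) \in F.1]| in C2 F11 *.
set g2 := #|[set x | f (inr x) \in F.1]| in C1 F21 *.
rewrite cI cS in iso.
apply: (arith n5 (leq_trans Fs sz) P1 D1 Tw1 P2 D2 Tw2 _ _ iso); lia.
Qed.

End KL.

Lemma min_degree_const (T : finType) (e : rel T) c :
  (forall v, #|[set w | e v w]| = c) -> c <= #|T| -> 0 < #|T| -> min_degree e = c.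
Proof.
move=> hd hc hT; rewrite /min_degree (eq_bigr (fun=> c)) //.
apply/eqP; rewrite eqn_leq; apply/andP; split.
- case/card_gt0P: hT => v _.
  have : v \in index_enum T by rewrite mem_index_enum.
  elim: (index_enum T) => [|x r IH] //= _.
  by rewrite big_cons geq_minl.
- apply: (big_ind (fun x => c <= x)) => //.
  by move=> x y hx hy; rewrite leq_min hx hy.
Qed.

Lemma gprops_mindeg m (T : finType) (e : rel T) : gprops m e -> min_degree e = 2 * m - 1.
Proof.
case=> _ _ hd _ hT; apply: min_degree_const => //.
case/card_gt0P: hT => v _; rewrite -(hd v); exact: max_card.
Qed.

Lemma GAQ_inv n (T : finType) (e : rel T) : GAQ n e -> 5 <= n ->
  exists (T1 T2 : finType) (e1 : rel T1) (e2 : rel T2) (f : T1 + T2 -> T) (m1 m2 : T1 -> T2),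
  [/\ GAQ n.-1 e1, GAQ n.-1 e2, bijective f & bijective m1] /\ bijective m2 /\
      (forall a, m1 a != m2 a) /\ (forall x y, e (f x) (f y) = gaq_join e1 e2 m1 m2 x y).
Proof.
case => [T0 e0 g bg He | n0 T0 T1 T2 e0 e1 e2 f m1 m2 n5 G1 G2 bf bm1 bm2 hne Hf] //.
move=> _; by exists T1, T2, e1, e2, f, m1, m2; split.
Qed.

Lemma theorem3p6_aux (R : realFieldType) (n : nat) :
  5 <= n ->
  (forall (T : finType) (e : rel T), GAQ n.-1 e -> even_strongly_super_matched e) ->
  (forall (T : finType) (e : rel T), GAQ n.-1 e -> frac_strongly_super_matched e R) ->
  forall (T : finType) (e : rel T), GAQ n e -> frac_strongly_super_matched e R.
Proof.
move=> n5 _ H2 T e HG.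
have [Ge _] := GAQ_props HG.
case: (GAQ_inv HG n5) => T1 [T2 [e1 [e2 [f [m1 [m2 [[HG1 HG2 bf bm1] [bm2 [hne Hf]]]]]]]]].
have [G1 _] := GAQ_props HG1.
have [G2 _] := GAQ_props HG2.
have Hfpm (Tk : finType) (ek : rel Tk) : GAQ n.-1 ek -> gprops n.-1 ek ->
    forall F, valid_fault ek F -> fsize F < 2 * n - 3 -> has_fpm ek R F.
  move=> HGk Gk F vF hF; case: (classic (has_fpm ek R F)) => // nf.
  have [[_ lb] _] := H2 _ _ HGk.
  have := lb F (conj vF nf); rewrite (gprops_mindeg Gk); lia.
have KLn := KL n5 bf bm1 Hf G1 G2 Ge (Hfpm _ _ HG1 G1) (Hfpm _ _ HG2 G2).
have md : min_degree e = 2 * n - 1 := gprops_mindeg Ge.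
case: (Ge) => esym eirr hd _ hT.
have isoL (F : fault T) : has_isolated e F -> 2 * n - 1 <= fsize F.
  case=> v [va hv]; rewrite -(hd v); exact: (iso_deg esym va hv).
rewrite /frac_strongly_super_matched /frac_strongly_maximally_matched /fsmp_is md.
split; [split|].
- case/card_gt0P: hT => v _.
  exists (star e v); split; last by rewrite star_size; exact: hd.
  by split; [exact: (star_valid esym) | exact: star_nofpm].
- move=> F [vF nf]; case: (classic (has_isolated e F)) => [/isoL // | ni].
  rewrite leqNgt; apply/negP => lt; apply: nf; apply: KLn => //; lia.
- move=> F [vF nf] sz; case: (classic (has_isolated e F)) => // ni.
  by case: nf; apply: KLn => //; rewrite sz.
Qed.

Unset Implicit Arguments.

Theorem theorem3p6 (R : realFieldType) (n : nat) :
  5 <= n ->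
  (forall (T : finType) (e : rel T), GAQ n.-1 e -> even_strongly_super_matched e) ->
  (forall (T : finType) (e : rel T), GAQ n.-1 e -> frac_strongly_super_matched e R) ->
  forall (T : finType) (e : rel T), GAQ n e -> frac_strongly_super_matched e R.
Proof. exact: theorem3p6_aux. Qed.
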